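(* Let $A$ be a flat layout and $N$ a positive integer. There exists an $N$-complement of $A$ if and only if $A$ is $N$-complementable.
   Context: A flat layout $L=(s_1,\dots,s_m):(d_1,\dots,d_m)$ has positive integer shape entries and nonnegative integer stride entries; $\mathrm{size}(L)=\prod s_i$, $\mathrm{cosize}(L)=1+\sum(s_i-1)d_i$; layout function $\Phi_L(x)=\sum x_id_i$, $x_i=\lfloor x/(s_1\cdots s_{i-1})\rfloor\bmod s_i$, on $[0,\mathrm{size}(L))$. $L$ is compact if $\Phi_L:[0,\mathrm{size}(L))\to[0,\mathrm{cosize}(L))$ is bijective. $A\star B$ denotes concatenation of shapes and of strides. A flat layout $B$ is an $N$-complement of $A$ if $A\star B$ is compact and $\mathrm{size}(A)\cdot\mathrm{size}(B)=N$. $\mathrm{squeeze}$ removes modes with $s_i=1$; $\mathrm{sort}$ stably reorders modes into nondecreasing order for $s:d\preceq s':d'$ iff $d<d'$ or ($d=d'$, $s\le s'$). $A$ is $N$-complementable if, writing $\mathrm{sort}(\mathrm{squeeze}(A))=(s_1,\dots,s_m):(d_1,\dots,d_m)$, $s_id_i\mid d_{i+1}$ for all $1\le i<m$ and $s_md_m\mid N$. *)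

(* Defs.v *)
From mathcomp Require Import all_boot.
Set Implicit Arguments. Unset Strict Implicit. Unset Printing Implicit Defensive.

(* A flat layout (s_1,...,s_m):(d_1,...,d_m) is represented as the sequence of
   modes [:: (s_1,d_1); ...; (s_m,d_m)] ; strides are nats (nonnegative). *)
Definition layout := seq (nat * nat).

Definition shape (L : layout) (i : nat) : nat := (nth (1, 0) L i).1.
Definition stride (L : layout) (i : nat) : nat := (nth (1, 0) L i).2.

Definition flat_layout (L : layout) : Prop := forall i, i < size L -> 0 < shape L i.

Definition lsize (L : layout) : nat := \prod_(i < size L) shape L i.

Definition cosize (L : layout) : nat := 1 + \sum_(i < size L) (shape L i - 1) * stride L i.

Definition coord (L : layout) (x i : nat) : nat :=
  (x %/ \prod_(j < i) shape L j) %% shape L i.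

Definition Phi (L : layout) (x : nat) : nat :=
  \sum_(i < size L) coord L x i * stride L i.

Definition compact (L : layout) : Prop :=
  [/\ (forall x, x < lsize L -> Phi L x < cosize L),
      (forall x y, x < lsize L -> y < lsize L -> Phi L x = Phi L y -> x = y)
    & (forall y, y < cosize L -> exists2 x, x < lsize L & Phi L x = y)].

Definition concat (A B : layout) : layout := A ++ B.

Definition complement (N : nat) (A B : layout) : Prop :=
  compact (concat A B) /\ lsize A * lsize B = N.

Definition squeeze (L : layout) : layout := [seq p <- L | p.1 != 1].

Definition mode_le (p q : nat * nat) : bool :=
  (p.2 < q.2) || ((p.2 == q.2) && (p.1 <= q.1)).

(* stable sort (mathcomp's merge sort is stable) *)
Definition lsort (L : layout) : layout := sort mode_le L.

Definition complementable (N : nat) (A : layout) : Prop :=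
  let S := lsort (squeeze A) in
  let m := size S in
  (forall i, i.+1 < m -> shape S i * stride S i %| stride S i.+1) /\
  (0 < m -> shape S m.-1 * stride S m.-1 %| N).

(* Main.v *)
Require Import Defs.
From mathcomp Require Import all_boot zify.
Set Implicit Arguments. Unset Strict Implicit. Unset Printing Implicit Defensive.


Lemma lsize_nil : lsize [::] = 1. Proof. by rewrite /lsize big_ord0. Qed.
Lemma lsize_cons p L : lsize (p :: L) = p.1 * lsize L.
Proof. by rewrite /lsize /= big_ord_recl. Qed.
Lemma cosize_nil : cosize [::] = 1. Proof. by rewrite /cosize big_ord0. Qed.
Lemma cosize_cons p L : cosize (p :: L) = (p.1 - 1) * p.2 + cosize L.
Proof. by rewrite /cosize /= big_ord_recl addnCA. Qed.
Lemma Phi_nil x : Phi [::] x = 0. Proof. by rewrite /Phi big_ord0. Qed.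
Lemma Phi_cons p L x : Phi (p :: L) x = (x %% p.1) * p.2 + Phi L (x %/ p.1).
Proof.
rewrite /Phi /= big_ord_recl; congr (_ + _).
  by rewrite /coord big_ord0 divn1.
apply: eq_bigr => i _; rewrite /coord /stride /shape /= big_ord_recl divnMA.
by [].
Qed.
Lemma lsize_cat A B : lsize (A ++ B) = lsize A * lsize B.
Proof. elim: A => [|p A IH] /=; by rewrite ?lsize_nil ?mul1n // !lsize_cons IH mulnA. Qed.
Lemma lsize_big L : lsize L = \prod_(p <- L) p.1.
Proof. elim: L => [|p L IH]; by rewrite ?lsize_nil ?big_nil // lsize_cons big_cons IH. Qed.
Lemma lsize_perm L1 L2 : perm_eq L1 L2 -> lsize L1 = lsize L2.
Proof. by move=> h; rewrite !lsize_big; apply: perm_big. Qed.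
Lemma flatP L : flat_layout L <-> all (fun p => 0 < p.1) L.
Proof.
split => [h|/all_nthP h i hi]; last exact: (h (1,0) i hi).
by apply/(all_nthP (1,0)) => i hi; apply: h.
Qed.

Fixpoint img (L : layout) : seq nat :=
  match L with
  | [::] => [:: 0]
  | p :: L' => [seq x * p.2 + z | x <- iota 0 p.1, z <- img L']
  end.

Definition Cpt (L : layout) := forall y, (y \in img L) = (y < lsize L).

Lemma imgP p L y : y \in img (p :: L) <->
  exists x z, [/\ x < p.1, z \in img L & y = x * p.2 + z].
Proof.
split => [/allpairsP [[x z] /= [hx hz ->]]|[x [z [hx hz ->]]]].
  by exists x, z; rewrite mem_iota in hx.
by apply: allpairs_f => //; rewrite mem_iota.
Qed.

Lemma size_img L : size (img L) = lsize L.
Proof. elim: L => [|p L IH] /=; by rewrite ?lsize_nil // size_allpairs size_iota IH lsize_cons. Qed.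

Lemma img0 L : 0 < lsize L -> 0 \in img L.
Proof.
elim: L => [|p L IH] //; rewrite lsize_cons muln_gt0 => /andP[h1 h2].
by apply/imgP; exists 0, 0; split => //; apply: IH.
Qed.

Lemma img_cong p L1 L2 : img L1 =i img L2 -> img (p :: L1) =i img (p :: L2).
Proof.
move=> h y; apply/idP/idP => /imgP [x [z [hx hz ->]]]; apply/imgP; exists x, z;
by rewrite ?h // -h.
Qed.

Lemma img_swap a b L : img (a :: b :: L) =i img (b :: a :: L).
Proof.
move=> y; apply/idP/idP => /imgP [x [z [hx /imgP [x' [z' [hx' hz' ->]]] ->]]].
  apply/imgP; exists x', (x * a.2 + z'); (split => //; last lia).
  by apply/imgP; exists x, z'.
apply/imgP; exists x', (x * b.2 + z'); (split => //; last lia).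
by apply/imgP; exists x, z'.
Qed.

Lemma img_rem a L : a \in L -> img L =i img (a :: rem a L).
Proof.
elim: L => [|b L IH] //=; rewrite inE eq_sym; case: eqP => [->|ne] //= hL.
move=> y; rewrite img_swap; apply: img_cong; exact: IH.
Qed.

Lemma img_perm L1 L2 : perm_eq L1 L2 -> img L1 =i img L2.
Proof.
elim: L1 L2 => [|a L1 IH] L2 hp.
  by move: hp; rewrite perm_sym => /perm_nilP ->.
have ha : a \in L2 by rewrite -(perm_mem hp) mem_head.
move=> y; rewrite (img_rem ha); apply: img_cong; apply: IH.
by rewrite -(perm_cons a) (perm_trans hp) // perm_to_rem.
Qed.

Lemma lsize_squeeze L : lsize (squeeze L) = lsize L.
Proof.
elim: L => [|p L IH] //=; rewrite lsize_cons; case: ifP => /= [_|/negbFE/eqP ->];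
by rewrite ?lsize_cons IH // mul1n.
Qed.

Lemma img_squeeze L : img (squeeze L) =i img L.
Proof.
elim: L => [|p L IH] //=; case: ifP => [_ | /negbFE/eqP h1] y /=.
  exact: img_cong.
rewrite IH; apply/idP/idP => [hy|/imgP [x [z [hx hz ->]]]].
  by apply/imgP; exists 0, y; rewrite h1.
by move: hx; rewrite h1 ltnS leqn0 => /eqP ->.
Qed.

Lemma img_lt L y : y \in img L -> y < cosize L.
Proof.
elim: L y => [|p L IH] y /=; first by rewrite inE cosize_nil => /eqP ->.
move/imgP => [x [z [hx /IH hz ->]]]; rewrite cosize_cons.
have : x * p.2 <= (p.1 - 1) * p.2 by apply: leq_mul => //; lia.
lia.
Qed.

Lemma img_top L : flat_layout L -> (cosize L).-1 \in img L.
Proof.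
move/flatP; elim: L => [|p L IH]; first by rewrite cosize_nil.
move=> /andP[hp /IH h]. rewrite cosize_cons; apply/imgP.
exists (p.1 - 1), (cosize L).-1; split => //; first lia.
have : 0 < cosize L by rewrite /cosize.
by move=> hc; rewrite -!subn1 addnBA.
Qed.

Lemma Phi_img L y : flat_layout L ->
  (y \in map (Phi L) (iota 0 (lsize L))) = (y \in img L).
Proof.
move/flatP; elim: L y => [|p L IH] y /=.
  by rewrite lsize_nil /= Phi_nil.
move=> /andP[hp hL]; rewrite lsize_cons; apply/mapP/idP.
  move=> [x]; rewrite mem_iota add0n => hx ->; apply/imgP; exists (x %% p.1), (Phi L (x %/ p.1)).
  split; [by rewrite ltn_mod | | by rewrite Phi_cons].
  rewrite -(IH _ hL); apply: map_f; rewrite mem_iota add0n ltn_divLR //.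
  by rewrite mulnC.
move=> /imgP [x [z [hx]]]; rewrite -(IH _ hL) => /mapP [q]; rewrite mem_iota add0n => /= hq -> ->.
exists (x + q * p.1).
  rewrite mem_iota add0n. 
  have : q * p.1 + p.1 <= p.1 * lsize L by rewrite -mulSnr mulnC leq_mul2l hq orbT.
  lia.
rewrite Phi_cons (addnC x) modnMDl divnMDl // modn_small // divn_small // addn0.
by [].
Qed.

Lemma lsize_gt0 L : flat_layout L -> 0 < lsize L.
Proof.
move/flatP; elim: L => [|p L IH]; first by rewrite lsize_nil.
by move=> /= /andP[h1 /IH h2]; rewrite lsize_cons muln_gt0 h1.
Qed.

Lemma compact_Cpt L : flat_layout L -> compact L <-> Cpt L.
Proof.
move=> fL; set s := map (Phi L) (iota 0 (lsize L)).
have hs y : (y \in s) = (y \in img L) by rewrite Phi_img.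
split.
  case=> hr hi hsu.
  have us : uniq s.
    rewrite map_inj_in_uniq ?iota_uniq // => x y.
    rewrite !mem_iota !add0n; exact: hi.
  have ms : s =i iota 0 (cosize L).
    move=> y; rewrite mem_iota add0n; apply/mapP/idP.
      by move=> [x]; rewrite mem_iota add0n => /hr h ->.
    by move=> /hsu [x hx <-]; exists x; rewrite ?mem_iota.
  have := perm_size (uniq_perm us (iota_uniq 0 _) ms).
  rewrite size_map !size_iota => e y.
  by rewrite -hs ms mem_iota e.
move=> hC.
have e : lsize L = cosize L.
  have c0 : 0 < cosize L by rewrite /cosize.
  have l0 := lsize_gt0 fL.
  have h1 := img_top fL; rewrite hC in h1.
  have := hC (lsize L).-1. rewrite (ltn_predL (lsize L)) l0 => /img_lt h2.
  lia.
have ms : s =i iota 0 (lsize L) by move=> y; rewrite hs hC mem_iota.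
have us : uniq s.
  apply: (leq_size_uniq (iota_uniq 0 (lsize L))).
    by move=> y; rewrite ms.
  by rewrite size_map !size_iota.
have nth_s x : x < lsize L -> nth 0 s x = Phi L x.
  by move=> hx; rewrite (nth_map 0) ?size_iota // nth_iota.
split.
- move=> x hx; apply: img_lt; rewrite -hs; apply: map_f.
  by rewrite mem_iota.
- move=> x y hx hy hxy; apply/eqP.
  rewrite -(nth_uniq 0 _ _ us) ?size_map ?size_iota //.
  by rewrite !nth_s // hxy.
- move=> y; rewrite -e => hy; have : y \in s by rewrite ms mem_iota. 
  move=> /mapP [x hx ->]; exists x => //.
  by move: hx; rewrite mem_iota.
Qed.

Lemma uniq_allpairs_pair (f : nat -> nat -> nat) u v x1 x2 z1 z2 :
  uniq u -> uniq [seq f x z | x <- u, z <- v] -> x1 \in u -> x2 \in u ->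
  z1 \in v -> z2 \in v -> f x1 z1 = f x2 z2 -> x1 = x2.
Proof.
move=> uu ua h1 h2 hz1 hz2 e; case: (eqVneq x1 x2) => // ne; exfalso.
have hp := perm_to_rem h1.
have := ua; rewrite (perm_uniq (perm_allpairs f hp (perm_refl v))) allpairs_cons.
rewrite cat_uniq => /and3P [_ hn _]; apply: (negP hn); apply/hasP; exists (f x2 z2).
  apply: allpairs_f => //; rewrite (mem_rem_uniq _ uu) inE h2 andbT.
  by rewrite eq_sym.
by rewrite -e; apply: map_f.
Qed.

Lemma img_one L : 1 \in img L -> exists s, (s, 1) \in L.
Proof.
elim: L => [|p L IH] /=; first by rewrite inE.
move/imgP => [x [z [hx hz e]]].
case: (posnP (x * p.2)) => h.
  rewrite h add0n in e; subst z; have [s hs] := IH hz.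
  by exists s; rewrite inE hs orbT.
have e2 : p.2 = 1 by move: h e; case: (p.2) => [|[|k]]; [rewrite muln0|by []|lia].
by exists p.1; rewrite inE -e2 -surjective_pairing eqxx.
Qed.

Lemma all_gt1_lsize L : all (fun p => 1 < p.1) L -> 0 < lsize L.
Proof.
move=> h; apply: lsize_gt0; apply/flatP; apply: sub_all h => p /=.
exact: ltnW.
Qed.

Lemma stride_img p L : all (fun q => 1 < q.1) L -> p \in L -> 1 < p.1 -> p.2 \in img L.
Proof.
elim: L => [|q L IH] //= /andP[hq hL]; rewrite inE => /orP [/eqP ->|hp] h1; apply/imgP.
  exists 1, 0; split => //; first by apply: img0; apply: all_gt1_lsize.
  by rewrite mul1n addn0.
by exists 0, p.2; split => //; [lia | apply: IH].
Qed.

Definition scl (s : nat) (L : layout) : layout := map (fun p => (p.1, s * p.2)) L.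

Lemma lsize_scl s L : lsize (scl s L) = lsize L.
Proof. elim: L => [|p L IH] //=; by rewrite !lsize_cons IH. Qed.

Lemma img_scl s L : img (scl s L) =i map (muln s) (img L).
Proof.
elim: L => [|p L IH] y; first by rewrite /= muln0. rewrite /scl map_cons -/(scl s L). apply/idP/mapP.
  move/imgP => [x [z [hx]]]; rewrite IH => /mapP [w hw ->] ->.
  exists (x * p.2 + w); last by rewrite /=; lia.
  by apply/imgP; exists x, w.
move=> [w /imgP [x [z [hx hz ->]]] ->]; apply/imgP; exists x, (s * z); split => //.
  by rewrite IH map_f.
by rewrite /=; lia.
Qed.

Lemma mulnI' s : 0 < s -> injective (muln s).
Proof. by move=> hs a b /eqP; rewrite eqn_pmul2l // => /eqP. Qed.

Lemma tiling s L' M : 0 < s -> uniq (img ((s, 1) :: L')) ->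
  (forall y, (y \in img ((s, 1) :: L')) = (y < M)) ->
  forall n, (n \in img L' -> s %| n) /\ (n < M -> s %| n -> n \in img L').
Proof.
move=> hs ui hM; elim/ltn_ind => n IH; split.
  move=> hn; case: (boolP (s %| n)) => // nd; exfalso.
  set r := n %% s; set m := n %/ s * s.
  have en : n = m + r by rewrite /m /r -divn_eq.
  have r0 : 0 < r by rewrite lt0n; exact: nd.
  have rs : r < s by rewrite ltn_mod.
  have nM : n < M by rewrite -hM; apply/imgP; exists 0, n; split.
  have mn : m < n by lia.
  have hm : m \in img L' by apply: (proj2 (IH m mn)); [lia | rewrite dvdn_mull].
  have := @uniq_allpairs_pair (fun x z => x * 1 + z) (iota 0 s) (img L') 0 r n m
    (iota_uniq 0 s) ui.
  rewrite !mem_iota /= hs rs hn hm => /(_ isT isT isT isT).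
  by rewrite mul0n muln1 add0n addnC -en => /(_ erefl) h; rewrite -h in r0.
move=> nM dn; have := nM; rewrite -hM => /imgP [x [z [hx hz e]]].
rewrite muln1 in e.
case: (posnP x) => [x0|xp]; first by rewrite e x0.
have zn : z < n by lia.
have dz := proj1 (IH z zn) hz.
have : s %| x by rewrite -(dvdn_addr _ dz) addnC -e.
move/(dvdn_leq xp); move: hx => /= hx; lia.
Qed.

Lemma lsize_gt1 L n : size L = n.+1 -> all (fun p => 1 < p.1) L -> 1 < lsize L.
Proof.
case: L => [|a L0] // _ /= /andP [ha aL0].
rewrite lsize_cons; have := all_gt1_lsize aL0.
by move=> h; apply: (leq_trans ha); rewrite leq_pmulr.
Qed.

Lemma structF n : forall L, size L = n -> all (fun p => 1 < p.1) L -> Cpt L ->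
  [/\ (forall p q, p \in L -> q \in L -> p.2 < q.2 -> p.1 * p.2 %| q.2),
      uniq (map snd L), (forall p, p \in L -> 0 < p.2)
    & (forall p, p \in L -> p.1 * p.2 %| lsize L)].
Proof.
elim: n => [|n IHn] L.
  by move/size0nil => -> _ _; split.
move=> sL aL hC.
have l1 : 1 < lsize L.
  exact: (lsize_gt1 sL aL).
have [s hsL] : exists s, (s, 1) \in L by apply: img_one; rewrite hC.
have hs : 1 < s by have := allP aL _ hsL.
have s0 : 0 < s by lia.
set L' := rem (s, 1) L.
have hperm : perm_eq L ((s, 1) :: L') := perm_to_rem hsL.
have hC' y : (y \in img ((s, 1) :: L')) = (y < s * lsize L').
  by rewrite -(img_perm hperm) hC (lsize_perm hperm) lsize_cons.
have sL' : size L' = n by rewrite size_rem // sL.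
have aL' : all (fun p => 1 < p.1) L'.
  by apply/allP => p /mem_rem hp; apply: (allP aL).
have ui : uniq (img ((s, 1) :: L')).
  apply: (leq_size_uniq (iota_uniq 0 (s * lsize L'))).
    by move=> y; rewrite mem_iota add0n hC'.
  by rewrite size_img size_iota lsize_cons.
have T := tiling s0 ui hC'.
have hdiv p : p \in L' -> s %| p.2.
  move=> hp; apply: (proj1 (T p.2)); apply: stride_img => //.
  exact: (allP aL').
set L'' := map (fun p => (p.1, p.2 %/ s)) L'.
have eL : L' = scl s L''.
  rewrite /scl /L'' -map_comp -[LHS]map_id; apply/eq_in_map => p hp /=.
  by rewrite mulnC divnK ?hdiv // -surjective_pairing.
have lL : lsize L' = lsize L'' by rewrite eL lsize_scl.
have hC'' : Cpt L''.
  move=> y; rewrite -lL -(ltn_pmul2l s0).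
  have -> : (y \in img L'') = (s * y \in img L').
    by rewrite eL img_scl mem_map //; apply: mulnI'.
  apply/idP/idP => [h|h].
    by rewrite -hC'; apply/imgP; exists 0, (s * y); split.
  by apply: (proj2 (T (s * y))) => //; rewrite dvdn_mulr.
have sL'' : size L'' = n by rewrite size_map.
have aL'' : all (fun p => 1 < p.1) L'' by rewrite all_map; apply: sub_all aL'.
have [IH1 IH2 IH3 IH4] := IHn L'' sL'' aL'' hC''.
have memL p : p \in L -> p = (s, 1) \/ exists2 q, q \in L'' & p = (q.1, s * q.2).
  rewrite (perm_mem hperm) inE => /orP [/eqP ->| ]; first by left.
  by rewrite eL => /mapP [q hq ->]; right; exists q.
have lE : lsize L = s * lsize L'' by rewrite (lsize_perm hperm) lsize_cons lL.
split.
- move=> p q /memL [->|[p' hp' ->]] /memL [->|[q' hq' ->]] /=.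
  + by rewrite ltnn.
  + move=> _; rewrite muln1 dvdn_mulr //.
  + have : 0 < s * p'.2 by rewrite muln_gt0 s0 IH3.
    by move=> h1; rewrite ltnNge h1.
  + rewrite ltn_pmul2l // => /(IH1 _ _ hp' hq') h.
    by rewrite mulnCA dvdn_pmul2l.
- have eS : map snd L' = map (muln s) (map snd L'') by rewrite eL /scl -!map_comp.
  rewrite (perm_uniq (perm_map snd hperm)) /= eS (map_inj_uniq (mulnI' s0)) IH2 andbT.
  apply/negP => /mapP [w /mapP [q hq ->] e].
  have := IH3 _ hq; move: e hs; clear; case: (q.2) => [|k] //; nia.
- by move=> p /memL [->|[q hq ->]] //=; rewrite muln_gt0 s0 IH3.
- move=> p /memL [->|[q hq ->]] /=; rewrite lE.
    by rewrite muln1 dvdn_mulr.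
  by rewrite mulnCA dvdn_pmul2l // IH4.
Qed.

Fixpoint Good (N prev : nat) (T : layout) : bool :=
  match T with [::] => prev %| N | p :: T' => (prev %| p.2) && Good N (p.1 * p.2) T' end.
Fixpoint mkB (N prev : nat) (T : layout) : layout :=
  match T with [::] => [:: (N %/ prev, prev)]
  | p :: T' => (p.2 %/ prev, prev) :: mkB N (p.1 * p.2) T' end.
Fixpoint Ch (N prev : nat) (T : layout) : layout :=
  match T with [::] => [:: (N %/ prev, prev)]
  | p :: T' => (p.2 %/ prev, prev) :: p :: Ch N (p.1 * p.2) T' end.
Fixpoint isChain (e : nat) (L : layout) : bool :=
  match L with [::] => true | p :: L' => (p.2 == e) && (0 < p.1) && isChain (p.1 * e) L' end.

Lemma Good_dvd N prev T : Good N prev T -> prev %| N.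
Proof.
elim: T prev => [|p T IH] prev //= /andP [h1 /IH h2].
by apply: (dvdn_trans h1); apply: dvdn_trans h2; apply: dvdn_mull.
Qed.

Lemma Good_pos N prev T : 0 < N -> Good N prev T -> 0 < prev.
Proof. by move=> N0 /Good_dvd; apply: dvdn_gt0. Qed.

Lemma chain_Ch N prev T : 0 < N -> Good N prev T -> isChain prev (Ch N prev T).
Proof.
move=> N0; elim: T prev => [|p T IH] prev /=.
  move=> h; have p0 := dvdn_gt0 N0 h.
  by rewrite eqxx divn_gt0 // dvdn_leq.
move=> /andP [h1 h2]; have := Good_pos N0 h2; rewrite muln_gt0 => /andP [q0 d0].
have p0 := dvdn_gt0 d0 h1.
by rewrite eqxx divn_gt0 // dvdn_leq //= divnK // eqxx q0 IH.
Qed.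

Lemma lsize_Ch N prev T : 0 < N -> Good N prev T -> lsize (Ch N prev T) * prev = N.
Proof.
move=> N0; elim: T prev => [|p T IH] prev /=.
  by move=> h; rewrite lsize_cons lsize_nil muln1 divnK.
move=> /andP [h1 h2]; have e := IH _ h2; rewrite !lsize_cons /=.
have d := divnK h1; move: e d.
set X := lsize _; set q := p.2 %/ prev => e d; rewrite -e -d; nia.
Qed.

Lemma perm_Ch N prev T : perm_eq (T ++ mkB N prev T) (Ch N prev T).
Proof.
elim: T prev => [|p T IH] prev //=.
apply: (@perm_trans _ ((p.2 %/ prev, prev) :: p :: (T ++ mkB N (p.1 * p.2) T))).
  by apply/permP => a; rewrite /= !count_cat /=; lia.
by rewrite !perm_cons IH.
Qed.

Lemma flat_mkB N prev T : 0 < N -> Good N prev T -> all (fun p => 0 < p.1) (mkB N prev T).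
Proof.
move=> N0; elim: T prev => [|p T IH] prev /=.
  move=> h; have p0 := dvdn_gt0 N0 h.
  by rewrite divn_gt0 // dvdn_leq.
move=> /andP [h1 h2]; have := Good_pos N0 h2; rewrite muln_gt0 => /andP [q0 d0].
have p0 := dvdn_gt0 d0 h1.
by rewrite divn_gt0 // dvdn_leq //= IH.
Qed.

Lemma img_chain e L : isChain e L -> img L =i map (muln e) (iota 0 (lsize L)).
Proof.
elim: L e => [|p L IH] e /=.
  by move=> _ y; rewrite lsize_nil /= muln0.
move=> /andP [/andP [/eqP pe p0] hc] y; apply/idP/mapP.
  move/imgP => [x [z [hx]]]; rewrite (IH _ hc) => /mapP [j]; rewrite mem_iota add0n => /= hj -> ->.
  exists (x + p.1 * j); last by rewrite pe; lia.
  rewrite mem_iota add0n lsize_cons.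
  have : p.1 * j + p.1 <= p.1 * lsize L by rewrite -mulnSr leq_mul2l hj orbT.
  lia.
move=> [k]; rewrite mem_iota add0n lsize_cons => /= hk ->; apply/imgP.
exists (k %% p.1), (p.1 * e * (k %/ p.1)); split; first by rewrite ltn_mod.
  rewrite (IH _ hc); apply: map_f; rewrite mem_iota add0n ltn_divLR //.
  by rewrite mulnC.
rewrite pe {1}(divn_eq k p.1); lia.
Qed.

Lemma Good_of N T prev :
  (0 < size T -> prev %| stride T 0) ->
  (forall i, i.+1 < size T -> Defs.shape T i * stride T i %| stride T i.+1) ->
  (0 < size T -> Defs.shape T (size T).-1 * stride T (size T).-1 %| N) ->
  (size T = 0 -> prev %| N) -> Good N prev T.
Proof.
elim: T prev => [|p T IH] prev h0 h1 h2 h3 /=; first exact: h3.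
rewrite (h0 isT) /=; apply: IH.
- by move=> hT; have := h1 0 hT.
- by move=> i hi; have := h1 i.+1 hi.
- by case: T {h0 h1 h3} h2 => // q T /(_ isT).
- by case: T {h0 h1 h3} h2 => // /(_ isT).
Qed.

Lemma mode_le_total : total mode_le.
Proof.
move=> p q; rewrite /mode_le; case: (ltngtP p.2 q.2) => //= e.
by rewrite leq_total.
Qed.

Lemma squeeze_cat A B : squeeze (A ++ B) = squeeze A ++ squeeze B.
Proof. exact: filter_cat. Qed.

Lemma forward A B N : flat_layout A -> flat_layout B -> compact (A ++ B) ->
  lsize A * lsize B = N -> complementable N A.
Proof.
move=> fA fB hc hN.
have fAB : flat_layout (A ++ B) by apply/flatP; rewrite all_cat; apply/andP; split; apply/flatP.
have hC := (compact_Cpt fAB).1 hc.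
set L0 := squeeze (A ++ B).
have hC0 : Cpt L0 by move=> y; rewrite img_squeeze hC lsize_squeeze.
have aL0 : all (fun p => 1 < p.1) L0.
  apply/allP => p; rewrite mem_filter => /andP [/= h1 h2].
  have := allP ((flatP _).1 fAB) _ h2; move: h1 => /= h1 h3; lia.
have [H1 H2 H3 H4] := structF erefl aL0 hC0.
have lN : lsize L0 = N by rewrite lsize_squeeze lsize_cat.
set T := lsort (squeeze A).
have memT p : p \in T -> p \in L0.
  by rewrite mem_sort /L0 squeeze_cat mem_cat => ->.
have uT : uniq (map snd T).
  rewrite (perm_uniq (perm_map snd (permEl (perm_sort _ _)))).
  by move: H2; rewrite /L0 squeeze_cat map_cat cat_uniq => /andP [].
have sT : sorted mode_le T by apply: sort_sorted; exact: mode_le_total.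
rewrite /complementable -/T; split.
  move=> i hi; move/(sortedP (1, 0)): (sT) => /(_ i hi).
  have ne : (nth (1, 0) T i).2 != (nth (1, 0) T i.+1).2.
    rewrite -!(nth_map (1, 0) 0) ?(ltnW hi) // nth_uniq ?size_map //.
      by rewrite eqn_leq ltnn andbF.
    exact: ltnW.
  rewrite /mode_le (negbTE ne) /= orbF => lt.
  by apply: H1 => //; apply: memT; apply: mem_nth => //; apply: ltnW.
move=> hT; rewrite -lN; apply: H4; apply: memT; apply: mem_nth.
by rewrite prednK.
Qed.

Lemma backward A N : flat_layout A -> 0 < N -> complementable N A ->
  exists B : layout, flat_layout B /\ complement N A B.
Proof.
move=> fA N0 [hc1 hc2].
set T := lsort (squeeze A) in hc1 hc2.
have G : Good N 1 T.
  by apply: Good_of => // *; apply: dvd1n.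
set B := mkB N 1 T.
have fB : flat_layout B by apply/flatP; apply: flat_mkB.
have fAB : flat_layout (A ++ B) by apply/flatP; rewrite all_cat; apply/andP; split; apply/flatP.
have hp : perm_eq (squeeze (A ++ B)) (squeeze (Ch N 1 T)).
  apply: (@perm_trans _ (squeeze (T ++ B))); last exact: perm_filter (perm_Ch _ _ _).
  rewrite !squeeze_cat perm_cat2r /squeeze.
  rewrite -[X in perm_eq X _]filter_id; apply: perm_filter.
  by rewrite perm_sym; apply/permEl/perm_sort.
have lE : lsize (A ++ B) = N.
  by rewrite -lsize_squeeze (lsize_perm hp) lsize_squeeze -[RHS](lsize_Ch N0 G) muln1.
exists B; split => //; split; last by rewrite -lsize_cat.
apply/(compact_Cpt fAB) => y.
rewrite -img_squeeze (img_perm hp) img_squeeze (img_chain (chain_Ch N0 G)).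
have lCh : lsize (Ch N 1 T) = N by rewrite -[RHS](lsize_Ch N0 G) muln1.
rewrite lE lCh map_id_in ?mem_iota // => x _; exact: mul1n.
Qed.

Theorem mainTheorem14 (A : layout) (N : nat) :
  flat_layout A -> 0 < N ->
  (exists B : layout, flat_layout B /\ complement N A B) <-> complementable N A.
Proof.
move=> fA N0; split.
  by move=> [B [fB [hc hN]]]; apply: (forward fA fB hc hN).
exact: backward.
Qed.
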